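(* Let $\delta\in(0,1/3)$. For $\tau>n^{-\delta}$, $$ \int_{-\pi}^{\pi} e^{-in(\theta-\tau\sin(\theta))}\, e^{-2n\tau\sin^2(\theta/2)}\,\frac{d\theta}{2\pi} \;=\;\frac{e^{n(\ln(\tau)+1-\tau)}}{\sqrt{2\pi n}}\,\bigl(1+o(1)\bigr)+o\!\left(\frac1n\right), $$ as $n\to\infty$. *)

(* Defs.v *)
From Stdlib Require Import Reals.
From Coquelicot Require Import Coquelicot.
Open Scope R_scope.

Definition phase (n : nat) (tau theta : R) : R := INR n * (theta - tau * sin theta).
Definition damp (n : nat) (tau theta : R) : R :=
  exp (- (2 * INR n * tau * (sin (theta / 2)) ^ 2)).

(* Complex-valued integrand e^{-i n(θ - τ sin θ)} e^{-2nτ sin^2(θ/2)},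
   written as (real part, imaginary part), using e^{-ix} = cos x - i sin x. *)
Definition integrand (n : nat) (tau theta : R) : C :=
  (cos (phase n tau theta) * damp n tau theta,
   - sin (phase n tau theta) * damp n tau theta).

Definition CRInt (f : R -> C) (a b : R) : C :=
  (RInt (fun t => Re (f t)) a b, RInt (fun t => Im (f t)) a b).

Definition LHS (n : nat) (tau : R) : C :=
  Cmult (RtoC (/ (2 * PI))) (CRInt (integrand n tau) (- PI) PI).

Definition main_term (n : nat) (tau : R) : R :=
  exp (INR n * (ln tau + 1 - tau)) / sqrt (2 * PI * INR n).

(* Main.v *)
Require Import Defs.
From Stdlib Require Import Reals Lra Lia.
From Coquelicot Require Import Coquelicot.
Open Scope R_scope.

Definition g (m x t : R) := exp (x * cos t) * cos (x * sin t - m * t).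
Definition kk (m x t : R) := exp (x * cos t) * sin (x * sin t - m * t).

Lemma cont_of_der (f : R -> R) t : ex_derive f t -> continuous f t.
Proof. intro H. apply (ex_derive_continuous (K:=R_AbsRing) (V:=R_NormedModule) f t H). Qed.

Lemma g_cont m x t : continuous (g m x) t.
Proof. apply cont_of_der. unfold g. auto_derive. easy. Qed.

Lemma kk_deriv m x t : is_derive (kk m x) t (x * g (m-1) x t - m * g m x t).
Proof.
  unfold kk, g. auto_derive. easy.
  replace (x * sin t - (m - 1) * t) with ((x * sin t - m * t) + t) by ring.
  rewrite (cos_plus (x * sin t - m * t) t). unfold Rminus. ring.
Qed.

Lemma rec_int m x : sin (m * PI) = 0 ->
  x * RInt (g (m-1) x) (-PI) PI - m * RInt (g m x) (-PI) PI = 0.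
Proof.
  intro Hs.
  assert (H := is_RInt_derive (kk m x) (fun t => x * g (m-1) x t - m * g m x t) (-PI) PI
     (fun t _ => kk_deriv m x t)).
  assert (E1 : ex_RInt (g (m-1) x) (-PI) PI) by (apply (ex_RInt_continuous (V:=R_CompleteNormedModule)); intros; apply g_cont).
  assert (E2 : ex_RInt (g m x) (-PI) PI) by (apply (ex_RInt_continuous (V:=R_CompleteNormedModule)); intros; apply g_cont).
  assert (H2 := is_RInt_minus _ _ _ _ _ _ (is_RInt_scal _ _ _ x _ (RInt_correct _ _ _ E1))
                 (is_RInt_scal _ _ _ m _ (RInt_correct _ _ _ E2))).
  assert (H' : is_RInt (fun t => x * g (m-1) x t - m * g m x t) (-PI) PI
             (minus (kk m x PI) (kk m x (-PI)))).
  { apply H. intros t _. apply cont_of_der. unfold g. auto_derive. easy. }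
  apply (is_RInt_unique (V:=R_CompleteNormedModule)) in H'. apply (is_RInt_unique (V:=R_CompleteNormedModule)) in H2.
  unfold minus, plus, opp, scal in H2; simpl in H2. unfold mult in H2; simpl in H2.
  assert (H3 : x * RInt (g (m-1) x) (-PI) PI - m * RInt (g m x) (-PI) PI = minus (kk m x PI) (kk m x (-PI))).
  { rewrite <- H'. symmetry. exact H2. }
  rewrite H3.
  unfold kk, minus, plus, opp; simpl.
  rewrite sin_neg, sin_PI, cos_neg, cos_PI.
  replace (x * 0 - (m * PI)) with (- (m*PI)) by ring.
  replace (x * -0 - (m * -PI)) with (m*PI) by ring.
  rewrite sin_neg, Hs. ring.
Qed.

Lemma g_dx u t : is_derive (fun z => g 0 z t) u (g (-1) u t).
Proof.
  unfold g. auto_derive. easy.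
  replace (u * sin t - -1 * t) with ((u * sin t - 0 * t) + t) by ring.
  rewrite (cos_plus (u * sin t - 0 * t) t). unfold Rminus. ring.
Qed.

Lemma exp_cpt y : continuity_pt exp y.
Proof. apply derivable_continuous_pt, derivable_pt_exp. Qed.

Lemma g_cont2 m u t : continuity_2d_pt (fun u v => g m u v) u t.
Proof.
  unfold g. apply continuity_2d_pt_mult.
  - apply (continuity_1d_2d_pt_comp exp (fun u v => u * cos v)). apply exp_cpt.
    apply continuity_2d_pt_mult. apply continuity_2d_pt_id1.
    apply (continuity_1d_2d_pt_comp cos (fun u v => v)). apply continuity_cos.
    apply continuity_2d_pt_id2.
  - apply (continuity_1d_2d_pt_comp cos (fun u v => u * sin v - m * v)). apply continuity_cos.
    apply continuity_2d_pt_minus.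
    apply continuity_2d_pt_mult. apply continuity_2d_pt_id1.
    apply (continuity_1d_2d_pt_comp sin (fun u v => v)). apply continuity_sin.
    apply continuity_2d_pt_id2.
    apply continuity_2d_pt_mult. apply continuity_2d_pt_const. apply continuity_2d_pt_id2.
Qed.

Lemma F0_deriv x : is_derive (fun y => RInt (g 0 y) (-PI) PI) x (RInt (g (-1) x) (-PI) PI).
Proof.
  assert (E : RInt (fun t => Derive (fun u => g 0 u t) x) (-PI) PI = RInt (g (-1) x) (-PI) PI).
  { apply RInt_ext. intros. apply is_derive_unique, g_dx. }
  rewrite <- E.
  apply (is_derive_RInt_param (fun u t => g 0 u t)).
  - apply filter_forall. intros y t _. eexists. apply g_dx.
  - intros t _. apply continuity_2d_pt_ext with (fun u v => g (-1) u v).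
    intros; symmetry; apply is_derive_unique, g_dx.
    apply g_cont2.
  - apply filter_forall. intros y. apply (ex_RInt_continuous (V:=R_CompleteNormedModule)).
    intros; apply g_cont.
Qed.

Lemma Fm1 x : RInt (g (-1) x) (-PI) PI = 0.
Proof.
  destruct (Req_dec x 0) as [->|Hx].
  - rewrite (RInt_ext _ cos).
    2:{ intros t _. unfold g. rewrite !Rmult_0_l, exp_0, Rmult_1_l. f_equal. ring. }
    assert (H := is_RInt_derive sin cos (-PI) PI (fun t _ => is_derive_sin t)
       (fun t _ => cont_of_der cos t ltac:(auto_derive; easy))).
    apply (is_RInt_unique (V:=R_CompleteNormedModule)) in H. rewrite H.
    unfold minus, plus, opp; simpl. rewrite sin_neg, sin_PI. ring.
  - assert (H := rec_int 0 x). rewrite Rmult_0_l in H.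
    replace (0 - 1) with (-1) in H by ring.
    specialize (H sin_0). rewrite Rmult_0_l, Rminus_0_r in H.
    apply Rmult_integral in H. destruct H; [contradiction|assumption].
Qed.

Lemma F0_val x : RInt (g 0 x) (-PI) PI = 2 * PI.
Proof.
  assert (Z : forall t, is_derive (fun y => RInt (g 0 y) (-PI) PI) t 0).
  { intro t. assert (H := F0_deriv t). rewrite Fm1 in H. exact H. }
  assert (V0 : RInt (g 0 0) (-PI) PI = 2 * PI).
  { rewrite (RInt_ext _ (fun _ => 1)).
    2:{ intros t _. unfold g. rewrite !Rmult_0_l, exp_0, Rmult_1_l, Rminus_0_r, cos_0. reflexivity. }
    rewrite RInt_const. unfold scal; simpl; unfold mult; simpl. ring. }
  destruct (Rtotal_order x 0) as [H|[H|H]].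
  - rewrite <- V0. apply (eq_is_derive (V:=R_NormedModule) (fun y => RInt (g 0 y) (-PI) PI) x 0).
    intros; apply Z. exact H.
  - subst; exact V0.
  - rewrite <- V0. symmetry. apply (eq_is_derive (V:=R_NormedModule) (fun y => RInt (g 0 y) (-PI) PI) 0 x).
    intros; apply Z. exact H.
Qed.

Lemma sin_nPI n : sin (INR n * PI) = 0.
Proof. apply sin_eq_0_1. exists (Z.of_nat n). rewrite INR_IZR_INZ. reflexivity. Qed.

Lemma Fn n x : RInt (g (INR n) x) (-PI) PI = 2 * PI * x ^ n / INR (Factorial.fact n).
Proof.
  induction n.
  - simpl. rewrite F0_val. field.
  - assert (H := rec_int (INR (S n)) x (sin_nPI (S n))).
    replace (INR (S n) - 1) with (INR n) in H by (rewrite S_INR; ring).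
    rewrite IHn in H.
    assert (HS : INR (S n) <> 0) by (apply not_0_INR; lia).
    assert (HF : INR (Factorial.fact n) <> 0) by apply INR_fact_neq_0.
    apply (Rmult_eq_reg_l (INR (S n))); [|exact HS].
    rewrite fact_simpl, mult_INR. simpl pow.
    replace (INR (S n) * (2 * PI * (x * x ^ n) / (INR (S n) * INR (Factorial.fact n))))
      with (x * (2 * PI * x ^ n / INR (Factorial.fact n))) by (field; split; assumption).
    lra.
Qed.

Lemma re_pt n tau t : Re (integrand n tau t) =
  exp (- (INR n * tau)) * g (INR n) (INR n * tau) t.
Proof.
  unfold integrand, g, phase, damp, Re; cbn [fst].
  rewrite <- Rmult_assoc, <- exp_plus.
  replace (INR n * tau * sin t - INR n * t) with (- (INR n * (t - tau * sin t))) by ring.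
  rewrite cos_neg.
  assert (Hc : cos t = 1 - 2 * sin (t/2) * sin (t/2)).
  { rewrite <- cos_2a_sin. f_equal. field. }
  rewrite Hc.
  replace (- (INR n * tau) + INR n * tau * (1 - 2 * sin (t / 2) * sin (t / 2)))
    with (- (2 * INR n * tau * sin (t / 2) ^ 2)) by ring.
  ring.
Qed.

Lemma im_odd n tau t : Im (integrand n tau (-t)) = - Im (integrand n tau t).
Proof.
  unfold integrand, phase, damp, Im; cbn [snd].
  replace (INR n * (- t - tau * sin (- t))) with (- (INR n * (t - tau * sin t)))
    by (rewrite sin_neg; ring).
  rewrite sin_neg.
  replace (-t/2) with (-(t/2)) by field. rewrite sin_neg. replace ((- sin (t/2))^2) with (sin (t/2) ^2) by ring. ring.
Qed.

Lemma im_int n tau : RInt (fun t => Im (integrand n tau t)) (-PI) PI = 0.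
Proof.
  set (h := fun t => Im (integrand n tau t)).
  assert (Ex : ex_RInt h PI (-PI)).
  { apply (ex_RInt_continuous (V:=R_CompleteNormedModule)). intros.
    apply cont_of_der. unfold h, integrand, phase, damp; simpl. auto_derive. easy. }
  assert (H := RInt_comp_lin h (-1) 0 (-PI) PI).
  replace (-1 * - PI + 0) with PI in H by ring.
  replace (-1 * PI + 0) with (-PI) in H by ring.
  specialize (H Ex).
  rewrite (RInt_ext _ h) in H.
  2:{ intros x _. unfold h. replace (-1 * x + 0) with (- x) by ring.
      rewrite im_odd. unfold scal; simpl; unfold mult; simpl. ring. }
  rewrite <- (opp_RInt_swap (V:=R_CompleteNormedModule) h (-PI) PI) in H.
  2:{ apply (ex_RInt_swap (V:=R_CompleteNormedModule)). exact Ex. }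
  unfold opp in H; simpl in H. fold h. lra.
Qed.

Lemma LHS_eq n tau : LHS n tau =
  RtoC (exp (- (INR n * tau)) * (INR n * tau) ^ n / INR (Factorial.fact n)).
Proof.
  unfold LHS, CRInt. rewrite im_int.
  rewrite (RInt_ext _ (fun t => scal (exp (- (INR n * tau))) (g (INR n) (INR n * tau) t))).
  2:{ intros; rewrite re_pt; reflexivity. }
  rewrite (RInt_scal (V:=R_CompleteNormedModule)).
  2:{ apply (ex_RInt_continuous (V:=R_CompleteNormedModule)). intros; apply g_cont. }
  rewrite Fn. unfold scal; simpl; unfold mult; simpl.
  unfold Cmult, RtoC; simpl. f_equal.
  - field. split. apply INR_fact_neq_0. apply PI_neq0.
  - ring.
Qed.
Lemma mono (f df : R -> R) a b : a <= b ->
  (forall y, a <= y <= b -> is_derive f y (df y)) ->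
  (forall y, a <= y <= b -> 0 <= df y) -> f a <= f b.
Proof.
  intros Hab Hd Hp.
  destruct (MVT_gen f a b df) as [c [Hc E]].
  - intros x Hx. rewrite Rmin_left, Rmax_right in Hx by lra. apply Hd; lra.
  - intros x Hx. rewrite Rmin_left, Rmax_right in Hx by lra.
    apply continuity_pt_filterlim.
    apply (ex_derive_continuous (K:=R_AbsRing) (V:=R_NormedModule) f x).
    eexists; apply Hd; lra.
  - rewrite Rmin_left, Rmax_right in Hc by lra.
    assert (0 <= df c * (b - a)) by (apply Rmult_le_pos; [apply Hp; lra | lra]).
    lra.
Qed.

Lemma ln_lower z : 1 <= z -> 2 * (z - 1) / (z + 1) <= ln z.
Proof.
  intro Hz.
  assert (H := mono (fun y => ln y - 2 * (y - 1) / (y + 1))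
                    (fun y => (y - 1)^2 / (y * (y + 1)^2)) 1 z Hz).
  cbv beta in H. rewrite ln_1 in H.
  replace (0 - 2 * (1 - 1) / (1 + 1)) with 0 in H by field.
  cut (0 <= ln z - 2 * (z - 1) / (z + 1)). lra.
  apply H.
  - intros y Hy. auto_derive. lra. field. lra.
  - intros y Hy. apply Rdiv_le_0_compat. nra.
    apply Rmult_lt_0_compat. lra. nra.
Qed.

Lemma ln_upper h : 0 <= h -> ln (1 + h) <= h - h^2/2 + h^3/3.
Proof.
  intro Hh.
  assert (H := mono (fun y => y - y^2/2 + y^3/3 - ln (1 + y))
                    (fun y => y^3 / (1 + y)) 0 h Hh).
  cbv beta in H. rewrite Rplus_0_r, ln_1 in H.
  cut (0 <= h - h ^ 2 / 2 + h ^ 3 / 3 - ln (1 + h)). lra.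
  replace 0 with (0 - 0 ^ 2 / 2 + 0 ^ 3 / 3 - 0) by field.
  apply H.
  - intros y Hy. auto_derive. lra. field. lra.
  - intros y Hy. apply Rdiv_le_0_compat. apply pow_le; lra. lra.
Qed.

Definition T (n : nat) : R :=
  ln (INR (Factorial.fact n)) + INR n - (INR n + /2) * ln (INR n).

Lemma T_diff n : (1 <= n)%nat ->
  T n - T (S n) = (INR n + /2) * ln ((INR n + 1) / INR n) - 1.
Proof.
  intro Hn. assert (HN : 1 <= INR n) by (apply (le_INR 1); lia).
  unfold T. rewrite fact_simpl, mult_INR, ln_mult.
  2: apply lt_0_INR; lia.
  2: apply lt_0_INR, Factorial.lt_O_fact.
  rewrite S_INR, ln_div by lra. ring.
Qed.

Lemma T_step n : (1 <= n)%nat ->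
  0 <= T n - T (S n) <= / (2 * INR n) - / (2 * INR (S n)).
Proof.
  intro Hn. assert (HN : 1 <= INR n) by (apply (le_INR 1); lia).
  rewrite T_diff by assumption. rewrite S_INR.
  set (N := INR n) in *.
  split.
  - assert (H := ln_lower ((N + 1) / N)).
    replace (2 * ((N + 1) / N - 1) / ((N + 1) / N + 1)) with (2 / (2 * N + 1)) in H
      by (field; lra).
    assert (H1 : 1 <= (N + 1) / N).
    { apply (Rmult_le_reg_r N). lra. field_simplify; lra. }
    specialize (H H1).
    assert (0 <= N + /2) by lra.
    assert ((N + /2) * (2 / (2 * N + 1)) = 1) by (field; lra).
    nra.
  - assert (H := ln_upper (/ N)).
    replace (1 + / N) with ((N + 1) / N) in H by (field; lra).
    assert (H1 : 0 <= / N) by (apply Rlt_le, Rinv_0_lt_compat; lra).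
    specialize (H H1).
    assert (0 <= N + /2) by lra.
    apply Rle_trans with ((N + /2) * (/ N - (/ N) ^ 2 / 2 + (/ N) ^ 3 / 3) - 1).
    { apply Rplus_le_compat_r. apply Rmult_le_compat_l; assumption. }
    assert (E : / (2 * N) - / (2 * (N + 1)) -
              ((N + /2) * (/ N - (/ N) ^ 2 / 2 + (/ N) ^ 3 / 3) - 1)
             = (5 * N ^ 2 - 3 * N - 2) / (12 * N ^ 3 * (N + 1))) by (field; lra).
    assert (0 <= (5 * N ^ 2 - 3 * N - 2) / (12 * N ^ 3 * (N + 1))).
    { apply Rdiv_le_0_compat. nra. assert (0 < N ^ 3) by (apply pow_lt; lra). nra. }
    lra.
Qed.

Lemma T_1 : T 1 = 1.
Proof. unfold T. simpl. rewrite ln_1. ring. Qed.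

Lemma T_lb n : (1 <= n)%nat -> 1/2 + / (2 * INR n) <= T n.
Proof.
  intro Hn. induction Hn.
  - rewrite T_1. simpl. lra.
  - assert (H := T_step m Hn). lra.
Qed.

Lemma T_cv : exists l : R, is_lim_seq (fun k => T (S k)) l.
Proof.
  destruct (decreasing_cv (fun k => T (S k))) as [l Hl].
  - intro k. assert (H := T_step (S k) ltac:(lia)). lra.
  - exists (- (1/2)). intros x [i ->]. unfold opp_seq.
    assert (H := T_lb (S i) ltac:(lia)).
    assert (0 < / (2 * INR (S i))).
    { apply Rinv_0_lt_compat. assert (1 <= INR (S i)) by (apply (le_INR 1); lia). lra. }
    lra.
  - exists l. apply is_lim_seq_Reals. exact Hl.
Qed.

Definition I (k : nat) : R := RInt (fun t => sin t ^ k) 0 (PI / 2).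



Lemma I_ex k : ex_RInt (fun t => sin t ^ k) 0 (PI / 2).
Proof.
  apply (ex_RInt_continuous (V:=R_CompleteNormedModule)). intros.
  apply cont_of_der. auto_derive. easy.
Qed.

Lemma I_rec k : (INR k + 2) * I (S (S k)) = (INR k + 1) * I k.
Proof.
  set (G := fun t => - cos t * sin t ^ (S k)).
  set (dG := fun t => (INR k + 2) * sin t ^ (S (S k)) - (INR k + 1) * sin t ^ k).
  assert (HD : forall t, is_derive G t (dG t)).
  { intro t. unfold G, dG. auto_derive. easy.
    change (match k with 0%nat => 1 | S _ => INR k + 1 end) with (INR (S k)).
    rewrite S_INR. simpl pow.
    assert (Hc : cos t * cos t = 1 - sin t * sin t) by (rewrite <- (sin2_cos2 t); unfold Rsqr; ring).
    apply Rminus_diag_uniq.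
    match goal with |- ?a - ?b = 0 => replace (a - b) with
      ((INR k + 1) * sin t ^ k * (1 - sin t * sin t - cos t * cos t)) by (unfold Rminus; ring) end.
    rewrite Hc. ring. }
  assert (H := is_RInt_derive G dG 0 (PI/2) (fun t _ => HD t)
                 (fun t _ => cont_of_der dG t ltac:(unfold dG; auto_derive; easy))).
  assert (H2 := is_RInt_minus _ _ _ _ _ _
                 (is_RInt_scal _ _ _ (INR k + 2) _ (RInt_correct _ _ _ (I_ex (S (S k)))))
                 (is_RInt_scal _ _ _ (INR k + 1) _ (RInt_correct _ _ _ (I_ex k)))).
  apply (is_RInt_unique (V:=R_CompleteNormedModule)) in H.
  apply (is_RInt_unique (V:=R_CompleteNormedModule)) in H2.
  unfold minus, plus, opp, scal in H2; simpl in H2. unfold mult in H2; simpl in H2.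
  assert (H3 : (INR k + 2) * I (S (S k)) - (INR k + 1) * I k = minus (G (PI/2)) (G 0)).
  { transitivity (RInt dG 0 (PI/2)). unfold I, dG. symmetry. exact H2. exact H. }
  unfold G, minus, plus, opp in H3; simpl in H3.
  rewrite cos_PI2, sin_0, cos_0 in H3. lra.
Qed.

Lemma I_0 : I 0 = PI / 2.
Proof.
  unfold I. simpl pow. rewrite RInt_const. unfold scal; simpl; unfold mult; simpl. ring.
Qed.

Lemma I_1 : I 1 = 1.
Proof.
  unfold I.
  assert (H : is_RInt (fun t => sin t ^ 1) 0 (PI/2) (minus (- cos (PI/2)) (- cos 0))).
  { apply (is_RInt_derive (fun t => - cos t)).
    - intros t _. auto_derive. easy. simpl. ring.
    - intros t _. apply cont_of_der. auto_derive. easy. }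
  apply (is_RInt_unique (V:=R_CompleteNormedModule)) in H. rewrite H.
  unfold minus, plus, opp; simpl. rewrite cos_PI2, cos_0. ring.
Qed.

Lemma I_decr k : I (S k) <= I k.
Proof.
  unfold I. apply RInt_le.
  - assert (H := PI_RGT_0). lra.
  - apply I_ex.
  - apply I_ex.
  - intros t Ht. simpl pow.
    assert (0 <= sin t) by (apply sin_ge_0; assert (H := PI_RGT_0); lra).
    assert (sin t <= 1) by apply (SIN_bound t).
    assert (0 <= sin t ^ k) by (apply pow_le; lra).
    nra.
Qed.

Fixpoint aW (n : nat) : R :=
  match n with
  | O => 1
  | S m => aW m * (2 * INR m + 1) / (2 * INR m + 2)
  end.

Lemma aW_pos n : 0 < aW n.
Proof.
  induction n; simpl. lra.
  assert (0 <= INR n) by apply pos_INR.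
  apply Rdiv_lt_0_compat. apply Rmult_lt_0_compat; lra. lra.
Qed.

Lemma I_closed n : I (2 * n) = PI / 2 * aW n /\ I (S (2 * n)) = / ((2 * INR n + 1) * aW n).
Proof.
  induction n.
  - simpl. rewrite I_0, I_1. split. ring. field.
  - destruct IHn as [H1 H2].
    assert (P := aW_pos n). assert (0 <= INR n) by apply pos_INR.
    replace (2 * S n)%nat with (S (S (2 * n))) by lia.
    assert (R1 := I_rec (2 * n)). assert (R2 := I_rec (S (2 * n))).
    rewrite mult_INR in R1. rewrite S_INR, mult_INR in R2. simpl INR in R1, R2.
    replace (1+1) with 2 in R1, R2 by ring.
    rewrite S_INR. simpl aW. split.
    + assert (E : I (S (S (2 * n))) = ((2 * INR n + 1) / (2 * INR n + 2)) * I (2 * n)).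
      { apply (Rmult_eq_reg_l (2 * INR n + 2)); [|lra]. rewrite R1. field. lra. }
      rewrite E, H1. field. lra.
    + assert (E : I (S (S (S (2 * n)))) = ((2 * INR n + 2) / (2 * INR n + 3)) * I (S (2 * n))).
      { apply (Rmult_eq_reg_l (2 * INR n + 1 + 2)); [|lra]. rewrite R2. field. lra. }
      rewrite E, H2. field. repeat split; lra.
Qed.

Lemma wallis_ineq n : 2 / PI <= (2 * INR n + 1) * aW n ^ 2 <= 2 / PI * ((2 * INR n + 2) / (2 * INR n + 1)).
Proof.
  destruct (I_closed n) as [H1 H2]. destruct (I_closed (S n)) as [H3 _].
  assert (D1 := I_decr (2 * n)). assert (D2 := I_decr (S (2 * n))).
  replace (S (S (2 * n))) with (2 * S n)%nat in D2 by lia.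
  rewrite H1, H2 in D1. rewrite H2, H3 in D2. simpl aW in D2.
  assert (P := aW_pos n). assert (0 <= INR n) by apply pos_INR. assert (Pi := PI_RGT_0).
  set (a := aW n) in *. set (N := INR n) in *.
  split.
  - assert (E : 2 / PI = (2 / PI) * ((2*N+1) * a) * / ((2 * N + 1) * a)) by (field; split; lra).
    rewrite E.
    replace ((2 * N + 1) * a ^ 2) with ((2 / PI) * ((2*N+1) * a) * (PI / 2 * a)) by (field; lra).
    apply Rmult_le_compat_l. apply Rmult_le_pos. apply Rlt_le, Rdiv_lt_0_compat; lra. nra.
    exact D1.
  - assert (E : 2 / PI * ((2 * N + 2) / (2 * N + 1)) =
                (2 / PI) * ((2*N+1) * a) * ((2 * N + 2) / (2 * N + 1)) * / ((2 * N + 1) * a))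
      by (field; repeat split; lra).
    rewrite E.
    replace ((2 * N + 1) * a ^ 2) with
      ((2 / PI) * ((2*N+1) * a) * ((2 * N + 2) / (2 * N + 1)) * (PI / 2 * (a * (2 * N + 1) / (2 * N + 2))))
      by (field; repeat split; lra).
    apply Rmult_le_compat_l.
    + assert (0 < 2/PI) by (apply Rdiv_lt_0_compat; lra).
      assert (0 < (2*N+2)/(2*N+1)) by (apply Rdiv_lt_0_compat; lra).
      assert (0 < (2*N+1)*a) by nra.
      apply Rlt_le. apply Rmult_lt_0_compat; [apply Rmult_lt_0_compat|]; assumption.
    + exact D2.
Qed.

Lemma aW_fact n : aW n * 4 ^ n * INR (Factorial.fact n) ^ 2 = INR (Factorial.fact (2 * n)).
Proof.
  induction n.
  - simpl. ring.
  - replace (2 * S n)%nat with (S (S (2 * n))) by lia.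
    rewrite !fact_simpl, !mult_INR, <- IHn. simpl aW.
    rewrite !S_INR, mult_INR. simpl INR. replace (1+1) with 2 by ring.
    assert (0 <= INR n) by apply pos_INR.
    simpl pow. field. lra.
Qed.

Lemma ln_small h : 0 <= h <= 1 -> 0 <= ln (1 + h) <= h.
Proof.
  intro Hh. split.
  - assert (H := ln_lower (1 + h) ltac:(lra)).
    assert (0 <= 2 * (1 + h - 1) / (1 + h + 1)) by (apply Rdiv_le_0_compat; lra). lra.
  - assert (H := ln_upper h ltac:(lra)). nra.
Qed.

Lemma c_bound n : (1 <= n)%nat ->
  Rabs (2 * T (2 * n) - 4 * T n + 2 * ln 2 - ln (2 / PI)) <= / INR n.
Proof.
  intro Hn. assert (HN : 1 <= INR n) by (apply (le_INR 1); lia).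
  assert (Pi := PI_RGT_0).
  assert (P := aW_pos n).
  assert (F := aW_fact n).
  assert (Hf : 0 < INR (Factorial.fact n)) by (apply lt_0_INR, Factorial.lt_O_fact).
  assert (Hf2 : 0 < INR (Factorial.fact (2 * n))) by (apply lt_0_INR, Factorial.lt_O_fact).
  assert (La : ln (aW n) = ln (INR (Factorial.fact (2 * n))) - INR n * (2 * ln 2)
                           - 2 * ln (INR (Factorial.fact n))).
  { rewrite <- F. rewrite !ln_mult; try apply pow_lt; try lra.
    2: apply Rmult_lt_0_compat; [lra | apply pow_lt; lra].
    rewrite !ln_pow by lra.
    replace 4 with (2 * 2) by ring. rewrite ln_mult by lra. simpl INR. ring. }
  assert (L1 : ln (INR (Factorial.fact n)) = T n - INR n + (INR n + /2) * ln (INR n))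
    by (unfold T; ring).
  assert (L2 : ln (INR (Factorial.fact (2 * n))) = T (2 * n) - 2 * INR n
                 + (2 * INR n + /2) * (ln 2 + ln (INR n))).
  { unfold T. rewrite mult_INR. simpl INR. replace (1+1) with 2 by ring.
    rewrite ln_mult by lra. ring. }
  set (N := INR n) in *.
  set (a := aW n) in *.
  assert (W := wallis_ineq n). fold N a in W.
  assert (Lw : ln ((2 * N + 1) * a ^ 2) = ln (2 * N + 1) + 2 * ln a).
  { rewrite ln_mult, ln_pow by (try apply pow_lt; lra). simpl INR. ring. }
  rewrite La, L1, L2 in Lw.
  assert (E1 : ln (2 * N + 1) = ln 2 + ln N + ln (1 + / (2 * N))).
  { assert (0 < / (2 * N)) by (apply Rinv_0_lt_compat; lra).
    replace (2 * N + 1) with (2 * N * (1 + / (2 * N))) at 1 by (field; lra).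
    rewrite (ln_mult (2 * N)), (ln_mult 2 N); lra. }
  assert (B1 := ln_small (/ (2 * N))).
  assert (0 < / (2 * N)) by (apply Rinv_0_lt_compat; lra).
  assert (/ (2 * N) <= 1) by (rewrite <- Rinv_1; apply Rinv_le_contravar; lra).
  specialize (B1 ltac:(lra)).
  assert (W1 : ln (2 / PI) <= ln ((2 * N + 1) * a ^ 2)).
  { apply ln_le. apply Rdiv_lt_0_compat; lra. apply W. }
  assert (W2 : ln ((2 * N + 1) * a ^ 2) <= ln (2 / PI) + ln (1 + / (2 * N + 1))).
  { rewrite <- ln_mult. apply ln_le. apply Rmult_lt_0_compat. lra. apply pow_lt; lra.
    replace (2 / PI * (1 + / (2 * N + 1))) with (2 / PI * ((2 * N + 2) / (2 * N + 1))) by (field; lra).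
    apply W. apply Rdiv_lt_0_compat; lra.
    assert (0 < / (2 * N + 1)) by (apply Rinv_0_lt_compat; lra). lra. }
  assert (B2 := ln_small (/ (2 * N + 1))).
  assert (0 < / (2 * N + 1)) by (apply Rinv_0_lt_compat; lra).
  assert (/ (2 * N + 1) <= 1) by (rewrite <- Rinv_1; apply Rinv_le_contravar; lra).
  specialize (B2 ltac:(lra)).
  assert (/ (2 * N) <= / N) by (apply Rinv_le_contravar; lra).
  assert (/ (2 * N + 1) <= / N) by (apply Rinv_le_contravar; lra).
  apply Rabs_le. split; lra.
Qed.

Lemma T_lim : is_lim_seq (fun k => T (S k)) (ln (2 * PI) / 2).
Proof.
  destruct T_cv as [l Hl].
  assert (H2 : is_lim_seq (fun k => T (2 * S k)) l).
  { apply is_lim_seq_ext with (fun k => T (S (2 * k + 1))).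
    intros; f_equal; lia.
    apply (is_lim_seq_subseq (fun k => T (S k)) l (fun k => 2 * k + 1)%nat).
    apply eventually_subseq. intros; lia. exact Hl. }
  assert (Hc : is_lim_seq (fun k => 2 * T (2 * S k) - 4 * T (S k) + 2 * ln 2)
                 (2 * l - 4 * l + 2 * ln 2)).
  { apply is_lim_seq_plus'. apply is_lim_seq_minus'.
    apply is_lim_seq_mult'. apply is_lim_seq_const. exact H2.
    apply is_lim_seq_mult'. apply is_lim_seq_const. exact Hl.
    apply is_lim_seq_const. }
  assert (Hinv : is_lim_seq (fun k => / INR (S k)) 0).
  { assert (H := is_lim_seq_inv _ _ is_lim_seq_INR ltac:(discriminate)).
    simpl in H. apply is_lim_seq_incr_1 in H. exact H. }
  assert (Hc2 : is_lim_seq (fun k => 2 * T (2 * S k) - 4 * T (S k) + 2 * ln 2) (ln (2 / PI))).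
  { apply is_lim_seq_le_le with (fun k => ln (2 / PI) - / INR (S k)) (fun k => ln (2 / PI) + / INR (S k)).
    - intro k. assert (H := c_bound (S k) ltac:(lia)).
      apply Rabs_le_between in H. lra.
    - assert (H := is_lim_seq_minus' _ _ _ _ (is_lim_seq_const (ln (2 / PI))) Hinv).
      rewrite Rminus_0_r in H. exact H.
    - assert (H := is_lim_seq_plus' _ _ _ _ (is_lim_seq_const (ln (2 / PI))) Hinv).
      rewrite Rplus_0_r in H. exact H. }
  apply is_lim_seq_unique in Hc. apply is_lim_seq_unique in Hc2.
  rewrite Hc in Hc2. injection Hc2 as E.
  assert (Pi := PI_RGT_0).
  rewrite ln_div in E by lra. rewrite ln_mult by lra.
  replace (( ln 2 + ln PI) / 2) with l by lra. exact Hl.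
Qed.


Lemma key n tau : (1 <= n)%nat -> 0 < tau ->
  exp (- (INR n * tau)) * (INR n * tau) ^ n / INR (Factorial.fact n) =
  main_term n tau * exp (ln (2 * PI) / 2 - T n).
Proof.
  intros Hn Ht. assert (HN : 1 <= INR n) by (apply (le_INR 1); lia).
  assert (Pi := PI_RGT_0).
  assert (Hf : 0 < INR (Factorial.fact n)) by (apply lt_0_INR, Factorial.lt_O_fact).
  assert (e1 : (INR n * tau) ^ n = exp (INR n * (ln (INR n) + ln tau))).
  { rewrite <- ln_mult by lra. rewrite <- Rpower_pow by nra. reflexivity. }
  assert (e2 : INR (Factorial.fact n) = exp (ln (INR (Factorial.fact n)))) by (rewrite exp_ln; lra).
  assert (e3 : sqrt (2 * PI * INR n) = exp (/2 * (ln (2 * PI) + ln (INR n)))).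
  { rewrite <- ln_mult by lra. rewrite <- Rpower_sqrt by nra. reflexivity. }
  unfold main_term, T. rewrite e1, e3. rewrite e2 at 1.
  unfold Rdiv. rewrite <- !exp_Ropp, <- !exp_plus. f_equal. ring.
Qed.

Theorem lemma3 (delta : R) (Hdelta : 0 < delta < 1 / 3) :
  forall eps : R, 0 < eps ->
  exists N : nat, forall (n : nat) (tau : R),
    (N <= n)%nat -> Rpower (INR n) (- delta) < tau ->
    exists a b : C,
      Cmod a <= eps /\ Cmod b <= eps / INR n /\
      LHS n tau = Cplus (Cmult (RtoC (main_term n tau)) (Cplus (RtoC 1) a)) b.
Proof.
  intros eps Heps.
  set (ls := ln (2 * PI) / 2).
  assert (Cp : continuity_pt (fun y => exp (ls - y)) ls).
  { apply continuity_pt_filterlim. apply (cont_of_der (fun y => exp (ls - y)) ls). auto_derive. easy. }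
  assert (Lc := is_lim_seq_continuous (fun y => exp (ls - y)) _ _ Cp T_lim).
  cbv beta in Lc. fold ls in Lc. rewrite Rminus_diag_eq, exp_0 in Lc by reflexivity.
  apply is_lim_seq_Reals in Lc.
  destruct (Lc eps Heps) as [N HN].
  exists (S N). intros n tau Hn Htau.
  assert (Ht : 0 < tau) by (eapply Rlt_trans; [|exact Htau]; unfold Rpower; apply exp_pos).
  destruct n as [|k]; [lia|].
  specialize (HN k ltac:(lia)). unfold R_dist in HN.
  exists (RtoC (exp (ls - T (S k)) - 1)), (RtoC 0).
  split; [|split].
  - rewrite Cmod_R. lra.
  - rewrite Cmod_R, Rabs_R0. apply Rlt_le, Rdiv_lt_0_compat. lra. apply lt_0_INR; lia.
  - rewrite LHS_eq, key by (lia || lra). fold ls.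
    apply injective_projections; simpl; ring.
Qed.
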